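(* Let $A$ be a finitely generated associative algebra with $M_N(A)=0$ for some $N$. For $a,b,d\in A$ and $m\in M_k(A)$, the element $[b,d][a,m]+[a,d][b,m]$ lies in $M_{k+2}(A)$.
   Context: $L_1=A$, $L_k=[A,L_{k-1}]$, $M_k=AL_kA$ (two-sided ideal generated by $L_k$). *)

(* Defs.v *)
From HB Require Import structures.
From mathcomp Require Import all_boot all_order all_algebra.
Set Implicit Arguments. Unset Strict Implicit. Unset Printing Implicit Defensive.
Import GRing.Theory.
Local Open Scope ring_scope.

Definition comm (K : fieldType) (A : algType K) (x y : A) : A := x * y - y * x.

Inductive in_subalg (K : fieldType) (A : algType K) (s : seq A) : A -> Prop :=
  | sa_gen x : x \in s -> in_subalg s x
  | sa_one : in_subalg s 1
  | sa_add x y : in_subalg s x -> in_subalg s y -> in_subalg s (x + y)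
  | sa_mul x y : in_subalg s x -> in_subalg s y -> in_subalg s (x * y)
  | sa_scale (c : K) x : in_subalg s x -> in_subalg s (c *: x).

Definition fin_gen_alg (K : fieldType) (A : algType K) : Prop :=
  exists s : seq A, forall x : A, in_subalg s x.

(* L k : the K-submodule L_1 = A, L_{k+1} = [A, L_k] (spanned by commutators).
   L 0 is the zero submodule (unused). *)
Inductive L (K : fieldType) (A : algType K) : nat -> A -> Prop :=
  | L_one x : L 1 x
  | L_comm k a l : L k.+1 l -> L k.+2 (comm a l)
  | L_zero k : L k 0
  | L_add k x y : L k x -> L k y -> L k (x + y)
  | L_scale k (c : K) x : L k x -> L k (c *: x).

Inductive M (K : fieldType) (A : algType K) (k : nat) : A -> Prop :=
  | M_gen x : L k x -> M k x
  | M_zero : M k 0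
  | M_add x y : M k x -> M k y -> M k (x + y)
  | M_scale (c : K) x : M k x -> M k (c *: x)
  | M_mull a x : M k x -> M k (a * x)
  | M_mulr a x : M k x -> M k (x * a).

(* Main.v *)
Require Import Defs.
From mathcomp Require Import all_boot all_order all_algebra.
Set Implicit Arguments. Unset Strict Implicit. Unset Printing Implicit Defensive.
Import GRing.Theory.
Local Open Scope ring_scope.

Inductive nx := NA of nat | N0 | NP of nx & nx | NN of nx | NM of nx & nx.

Fixpoint nev (R : pzRingType) (env : seq R) (t : nx) : R :=
  match t with
  | NA i => nth 0 env i
  | N0 => 0
  | NP a b => nev env a + nev env b
  | NN a => - nev env a
  | NM a b => nev env a * nev env b
  end.

Definition wev (R : pzRingType) (env : seq R) (w : seq nat) : R :=
  foldr (fun i acc => nth 0 env i * acc) 1 w.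

Definition msum (R : pzRingType) (env : seq R) (s : seq (seq nat * int)) : R :=
  foldr (fun p acc => wev env p.1 *~ p.2 + acc) 0 s.

Fixpoint ins (p : seq nat * int) (s : seq (seq nat * int)) :=
  match s with
  | [::] => [:: p]
  | q :: s' => if p.1 == q.1 then (q.1, p.2 + q.2) :: s' else q :: ins p s'
  end.

Definition nadd s1 s2 := foldr ins s2 s1.
Definition nopp (s : seq (seq nat * int)) := map (fun p => (p.1, - p.2)) s.
Definition nmul (s1 s2 : seq (seq nat * int)) :=
  foldr (fun p acc => nadd (map (fun q => (p.1 ++ q.1, p.2 * q.2)) s2) acc) [::] s1.

Fixpoint nnorm (t : nx) : seq (seq nat * int) :=
  match t with
  | NA i => [:: ([:: i], 1)]
  | N0 => [::]
  | NP a b => nadd (nnorm a) (nnorm b)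
  | NN a => nopp (nnorm a)
  | NM a b => nmul (nnorm a) (nnorm b)
  end.

Lemma msum_ins (R : pzRingType) (env : seq R) p s :
  msum env (ins p s) = wev env p.1 *~ p.2 + msum env s.
Proof.
elim: s => [|q s IH] /=; first by rewrite /msum /= addr0.
case: eqP => [->|_] /=.
  by rewrite /msum /= mulrzDr addrA.
by rewrite /msum /= -/(msum env _) IH addrCA.
Qed.

Lemma msum_nadd (R : pzRingType) (env : seq R) s1 s2 :
  msum env (nadd s1 s2) = msum env s1 + msum env s2.
Proof.
elim: s1 => [|p s1 IH] /=; first by rewrite /msum /= add0r.
by rewrite msum_ins IH /msum /= addrA.
Qed.

Lemma msum_nopp (R : pzRingType) (env : seq R) s :
  msum env (nopp s) = - msum env s.
Proof.
elim: s => [|p s IH] /=; first by rewrite /msum /= oppr0.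
by rewrite /msum /= -/(msum env _) -/(msum env (nopp s)) IH mulrNz opprD.
Qed.

Lemma wev_cat (R : pzRingType) (env : seq R) w1 w2 :
  wev env (w1 ++ w2) = wev env w1 * wev env w2.
Proof.
elim: w1 => [|i w1 IH] /=; first by rewrite /wev /= mul1r.
by rewrite /wev /= -!/(wev env _) IH mulrA.
Qed.

Lemma msum_map (R : pzRingType) (env : seq R) (p : seq nat * int) s :
  msum env (map (fun q => (p.1 ++ q.1, p.2 * q.2)) s) = (wev env p.1 *~ p.2) * msum env s.
Proof.
elim: s => [|q s IH] /=; first by rewrite /msum /= mulr0.
rewrite /msum /= -!/(msum env _) IH mulrDr wev_cat; congr (_ + _).
by rewrite mulrzAl mulrzAr -mulrzA; congr (_ *~ _); exact: mulrC.
Qed.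

Lemma msum_nmul (R : pzRingType) (env : seq R) s1 s2 :
  msum env (nmul s1 s2) = msum env s1 * msum env s2.
Proof.
elim: s1 => [|p s1 IH] /=; first by rewrite /msum /= mul0r.
rewrite /nmul /= -/(nmul s1 s2) msum_nadd IH msum_map.
by rewrite /msum /= -!/(msum env _) mulrDl.
Qed.

Lemma nev_norm (R : pzRingType) (env : seq R) t : nev env t = msum env (nnorm t).
Proof.
elim: t => [i||a IHa b IHb|a IHa|a IHa b IHb] /=.
- by rewrite /msum /wev /= mulr1 addr0.
- by [].
- by rewrite msum_nadd IHa IHb.
- by rewrite msum_nopp IHa.
- by rewrite msum_nmul IHa IHb.
Qed.

Lemma msum0 (R : pzRingType) (env : seq R) s :
  all (fun p => p.2 == 0) s -> msum env s = 0.
Proof.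
elim: s => [|p s IH] //= /andP [/eqP H1 H2].
by rewrite /msum /= -/(msum env _) H1 mulr0z IH // addr0.
Qed.

Lemma nc_sound (R : pzRingType) (env : seq R) t1 t2 :
  all (fun p => p.2 == 0) (nnorm (NP t1 (NN t2))) -> nev env t1 = nev env t2.
Proof.
move=> H; apply/eqP; rewrite -subr_eq0.
have := nev_norm env (NP t1 (NN t2)); rewrite /= => ->.
by rewrite msum0.
Qed.

Ltac nlist_mem x l :=
  match l with
  | cons ?y _ => let _ := constr:(ltac:(unify x y; exact tt) : unit) in constr:(true)
  | cons _ ?l' => nlist_mem x l'
  | _ => constr:(false)
  end.
Ltac natoms t env :=
  match t with
  | ?a + ?b => let e := natoms a env in natoms b e
  | ?a * ?b => let e := natoms a env in natoms b e
  | - ?a => natoms a env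
  | 0 => env
  | _ => let m := nlist_mem t env in
         match m with true => env | false => constr:(cons t env) end
  end.
Ltac nidx x l :=
  match l with
  | cons ?y _ => let _ := constr:(ltac:(unify x y; exact tt) : unit) in constr:(0%N)
  | cons _ ?l' => let n := nidx x l' in constr:(S n)
  end.
Ltac nreify t env :=
  match t with
  | ?a + ?b => let ra := nreify a env in let rb := nreify b env in constr:(NP ra rb)
  | ?a * ?b => let ra := nreify a env in let rb := nreify b env in constr:(NM ra rb)
  | - ?a => let ra := nreify a env in constr:(NN ra)
  | 0 => constr:(N0)
  | _ => let n := nidx t env in constr:(NA n)
  end.
Ltac nc_solve :=
  lazymatch goal with |- @eq ?V ?L ?R =>
    let env := natoms L (@nil V) in
    let env := natoms R env in
    let l := nreify L env in
    let r := nreify R env in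
    change (nev env l = nev env r); apply: nc_sound; vm_compute; reflexivity
  end.

Ltac nc := rewrite /comm; nc_solve.

Lemma MN (K : fieldType) (A : algType K) n (x : A) : M n x -> M n (- x).
Proof. by move=> h; rewrite -scaleN1r; apply: M_scale. Qed.

Lemma MB (K : fieldType) (A : algType K) n (x y : A) : M n x -> M n y -> M n (x - y).
Proof. by move=> hx hy; apply: M_add => //; apply: MN. Qed.

Lemma cE (K : fieldType) (A : algType K) n (z : A)
  (H : forall x y : A, M n (comm x (comm y z))) (x y1 y2 : A) :
  M n (comm x y1 * comm y2 z + comm x y2 * comm y1 z).
Proof.
have -> : comm x y1 * comm y2 z + comm x y2 * comm y1 z =
  comm x (comm (y1 * y2) z) - y1 * comm x (comm y2 z) - comm x (comm y1 z) * y2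
  + comm (comm x y2) (comm y1 z) by nc.
exact: M_add (MB (MB (H _ _) (M_mull _ (H _ _))) (M_mulr _ (H _ _))) (H _ _).
Qed.

Definition Qf (K : fieldType) (A : algType K) (x y1 y2 z : A) :=
  comm x y1 * comm y2 z + comm x y2 * comm y1 z.

Ltac nc2 := rewrite /Qf /comm; nc_solve.

Lemma E3 (K : fieldType) (A : algType K) n (w : A)
  (H : forall al be ga : A, M n (comm al (comm be (comm ga w)))) (x b g1 g2 : A) :
  M n (comm x (comm b g1) * comm g2 w + comm g1 w * comm x (comm b g2)).
Proof.
have hQ : forall u y1 y2 g, M n (Qf u y1 y2 (comm g w)).
  by move=> u y1 y2 g; apply: (cE (fun x y => H x y g)).
have -> : comm x (comm b g1) * comm g2 w + comm g1 w * comm x (comm b g2) =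
 comm x (comm b (comm (g1*g2) w)) - g1 * comm x (comm b (comm g2 w))
 - comm x (comm b (comm g1 w)) * g2
 + comm (comm x g2) (comm b (comm g1 w)) + comm (comm b g2) (comm x (comm g1 w))
 - Qf b g1 x (comm g2 w) - Qf x g1 b (comm g2 w) - Qf x g2 b (comm g1 w)
 - Qf b g2 x (comm g1 w) by nc2.
exact: MB (MB (MB (MB (M_add (M_add (MB (MB (H _ _ _) (M_mull _ (H _ _ _)))
   (M_mulr _ (H _ _ _))) (H _ _ _)) (H _ _ _)) (hQ _ _ _ _)) (hQ _ _ _ _)) (hQ _ _ _ _))
   (hQ _ _ _ _).
Qed.

Lemma E4 (K : fieldType) (A : algType K) n (w : A)
  (H : forall al be ga : A, M n (comm al (comm be (comm ga w)))) (x p q b g1 : A) :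
  M n (comm b (comm g1 w) * comm x (comm p q)).
Proof.
have hQ : forall u y1 y2 g, M n (Qf u y1 y2 (comm g w)).
  by move=> u y1 y2 g; apply: (cE (fun x y => H x y g)).
have -> : comm b (comm g1 w) * comm x (comm p q) =
  Qf x (comm p q) b (comm g1 w)
  - comm x b * (comm p (comm q (comm g1 w)) - comm q (comm p (comm g1 w)))
  - comm (comm x (comm p q)) (comm b (comm g1 w)) by nc2.
exact: MB (MB (hQ _ _ _ _) (M_mull _ (MB (H _ _ _) (H _ _ _)))) (H _ _ _).
Qed.

Lemma LB (K : fieldType) (A : algType K) n (w : A)
  (H : forall al be ga : A, M n (comm al (comm be (comm ga w)))) (a b c d y : A) :
  M n (comm c w * (comm b d * comm a y + comm a d * comm b y)).
Proof.
have -> : comm c w * (comm b d * comm a y + comm a d * comm b y) =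
  (comm a (comm b c) * comm (d * y) w + comm c w * comm a (comm b (d * y)))
  - (comm a (comm b c) * comm d w + comm c w * comm a (comm b d)) * y
  - d * (comm a (comm b c) * comm y w + comm c w * comm a (comm b y))
  + (comm d (comm a (comm b c)) * comm y w + comm (comm b c) w * comm d (comm a y))
  - comm b (comm c w) * comm d (comm a y) + comm c (comm b w) * comm d (comm a y)
  + comm d (comm c w) * comm a (comm b y) by nc.
exact: M_add (M_add (MB (M_add (MB (MB (E3 H _ _ _ _) (M_mulr _ (E3 H _ _ _ _)))
  (M_mull _ (E3 H _ _ _ _))) (E3 H _ _ _ _)) (E4 H _ _ _ _ _)) (E4 H _ _ _ _ _))
  (E4 H _ _ _ _ _).
Qed.

Definition Ef (K : fieldType) (A : algType K) (a b d m : A) :=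
  comm b d * comm a m + comm a d * comm b m.

Lemma Ey3 (K : fieldType) (A : algType K) (a b d y : A) : M 3 (Ef a b d y).
Proof.
have L3 : forall u v z : A, M 3 (comm u (comm v z)).
  by move=> u v z; apply: M_gen; apply: L_comm; apply: L_comm; apply: L_one.
have -> : Ef a b d y = comm a (comm b (d * y)) - comm a (comm b d) * y
  - d * comm a (comm b y) by rewrite /Ef; nc.
exact: MB (MB (L3 _ _ _) (M_mulr _ (L3 _ _ _))) (M_mull _ (L3 _ _ _)).
Qed.

Lemma LB_all (K : fieldType) (A : algType K) (a b d y : A) k (l : A) :
  L k l -> (0 < k)%N -> M k.+2 (l * Ef a b d y).
Proof.
elim=> {k l} [x _|k a0 l0 Hl0 _ _|k _|k x z _ IHx _ IHz hk|k c x _ IHx hk].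
- exact: M_mull (Ey3 _ _ _ _).
- apply: LB => al be ga.
  by apply: M_gen; do 3! apply: L_comm.
- by rewrite mul0r; apply: M_zero.
- by rewrite mulrDl; apply: M_add; [apply: IHx | apply: IHz].
- by rewrite -scalerAl; apply: M_scale; apply: IHx.
Qed.

Lemma LA (K : fieldType) (A : algType K) (a b d : A) k (l : A) :
  L k.+1 l -> M k.+3 (Ef a b d l).
Proof.
move=> hl.
have H : forall x y : A, M k.+3 (comm x (comm y l)).
  by move=> x y; apply: M_gen; do 2! apply: L_comm.
have -> : Ef a b d l = - Qf d b a l by rewrite /Ef; nc2.
exact: MN (cE H _ _ _).
Qed.

Lemma L_down (K : fieldType) (A : algType K) n (x : A) :
  L n x -> forall k, n = k.+1 -> (0 < k)%N -> L k x.
Proof.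
elim=> {n x} [x|j a l _ IH|j|j x y _ IHx _ IHy|j c x _ IHx] k.
- by move=> [<-].
- move=> [<-] _; case: j l IH => [|j] l IH; first by apply: L_one.
  by apply: L_comm; apply: IH.
- by move=> _ _; apply: L_zero.
- by move=> e hk; apply: L_add; [apply: IHx | apply: IHy].
- by move=> e hk; apply: L_scale; apply: IHx.
Qed.

Inductive Sp (K : fieldType) (A : algType K) (k : nat) : A -> Prop :=
  | Sp_gen l y : L k l -> Sp k (l * y)
  | Sp_0 : Sp k 0
  | Sp_add x y : Sp k x -> Sp k y -> Sp k (x + y)
  | Sp_scale (c : K) x : Sp k x -> Sp k (c *: x).

Lemma Sp_mull (K : fieldType) (A : algType K) k (a m : A) :
  (0 < k)%N -> Sp k m -> Sp k (a * m).
Proof.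
move=> hk; elim=> {m} [l y hl||x y _ IHx _ IHy|c x _ IHx].
- have -> : a * (l * y) = l * (a * y) + comm a l * y by rewrite /comm; nc_solve.
  apply: Sp_add; first exact: Sp_gen.
  apply: Sp_gen; case: k hk hl => // k _ hl.
  case: k hl => [|k] hl; first exact: L_one.
  by apply: (L_down (L_comm a hl)).
- by rewrite mulr0; apply: Sp_0.
- by rewrite mulrDr; apply: Sp_add.
- by rewrite -scalerAr; apply: Sp_scale.
Qed.

Lemma Sp_mulr (K : fieldType) (A : algType K) k (a m : A) :
  Sp k m -> Sp k (m * a).
Proof.
elim=> {m} [l y hl||x y _ IHx _ IHy|c x _ IHx].
- by rewrite -mulrA; apply: Sp_gen.
- by rewrite mul0r; apply: Sp_0.
- by rewrite mulrDl; apply: Sp_add.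
- by rewrite -scalerAl; apply: Sp_scale.
Qed.

Lemma M_Sp (K : fieldType) (A : algType K) k (m : A) :
  (0 < k)%N -> M k m -> Sp k m.
Proof.
move=> hk; elim=> {m} [x hx||x y _ IHx _ IHy|c x _ IHx|a x _ IHx|a x _ IHx].
- by rewrite -[x]mulr1; apply: Sp_gen.
- exact: Sp_0.
- exact: Sp_add.
- exact: Sp_scale.
- exact: Sp_mull.
- exact: Sp_mulr.
Qed.

Lemma E_Sp (K : fieldType) (A : algType K) (a b d : A) k (m : A) :
  (0 < k)%N -> Sp k m -> M k.+2 (Ef a b d m).
Proof.
move=> hk; elim=> {m} [l y hl||x y _ IHx _ IHy|c x _ IHx].
- have -> : Ef a b d (l * y) = Ef a b d l * y + l * Ef a b d y
    + (comm b (comm d l) - comm d (comm b l)) * comm a y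
    + (comm a (comm d l) - comm d (comm a l)) * comm b y by rewrite /Ef; nc.
  case: k hk hl => // k _ hl.
  have L2 : forall u v : A, M k.+3 (comm u (comm v l)).
    by move=> u v; apply: M_gen; do 2! apply: L_comm.
  apply: M_add; last exact: M_mulr (MB (L2 _ _) (L2 _ _)).
  apply: M_add; last exact: M_mulr (MB (L2 _ _) (L2 _ _)).
  apply: M_add; first exact: M_mulr (LA _ _ _ hl).
  exact: LB_all.
- have -> : Ef a b d 0 = 0 by rewrite /Ef; nc.
  exact: M_zero.
- have -> : Ef a b d (x + y) = Ef a b d x + Ef a b d y by rewrite /Ef; nc.
  exact: M_add.
- have hc : forall u : A, comm u (c *: x) = c *: comm u x.
    by move=> u; rewrite /comm -scalerAr -scalerAl scalerBr.
  rewrite /Ef !hc -!scalerAr -scalerDr; apply: M_scale; exact: IHx.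
Qed.

Theorem lemma3p6 (K : fieldType) (A : algType K)
  (hfg : fin_gen_alg A) (N : nat) (hN : forall x : A, M N x -> x = 0)
  (k : nat) (hk : (1 <= k)%N) (a b d m : A) (hm : M k m) :
  M (k + 2) (comm b d * comm a m + comm a d * comm b m).
Proof.
rewrite addn2.
exact: (E_Sp a b d hk (M_Sp hk hm)).
Qed.
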